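(* Let $\alpha\in\mathbb{R}$ and $\{\mu_n\}_{n\in\mathbb{N}}\cup\{\mu\}\subset\mathcal{M}(\mathbb{R})$. (a) If $F^{(\alpha)}_{\mu_n}(x)\to F^{(\alpha)}_\mu(x)$ at all continuity points $x$ of $\mu$ and $\{\mu_n\}$ is bounded on compact sets, then $\mu_n\to\mu$ vaguely. (b) If $\mu_n\to\mu$ vaguely, $\alpha$ is a continuity point of $\mu$, and $\{\mu_n\}$ has no mass at every continuity point of $\mu$, then $F^{(\alpha)}_{\mu_n}(x)\to F^{(\alpha)}_\mu(x)$ at all continuity points $x$ of $\mu$. Moreover, both parts remain true for $\alpha=-\infty$ (resp. $\alpha=+\infty$), where in (a) one requires in addition that $\sup_n|\mu_n|((-\infty,c])<\infty$ for every $c\in\mathbb{R}$ (resp. $\sup_n|\mu_n|((c,\infty))<\infty$ for every $c\in\mathbb{R}$), and in (b) the requirement that $\alpha$ be a continuity point is replaced by the requirement that $\{\mu_n\}$ has no mass at $-\infty$ (resp. $+\infty$), i.e. for every $\varepsilon>0$ there is $c\in\mathbb{R}$ with $\limsup_n|\mu_n|((-\infty,c))\le\varepsilon$ (resp. $\limsup_n|\mu_n|((c,\infty))\le\varepsilon$).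
   Context: $\mathcal{M}(\mathbb{R})$ is the set of finite signed Borel measures on $\mathbb{R}$ (all are Radon); $|\mu|$ denotes the variation measure. For $\alpha\in\mathbb{R}$, $F^{(\alpha)}_\mu(x)=\mu((\alpha,x])$ for $x\ge\alpha$ and $F^{(\alpha)}_\mu(x)=-\mu((x,\alpha])$ for $x<\alpha$; further $F^{(-\infty)}_\mu(x)=\mu((-\infty,x])$ and $F^{(+\infty)}_\mu(x)=-\mu((x,\infty))$. A point $x\in\mathbb{R}$ is a continuity point of $\mu$ if $\mu(\{x\})=0$. Vague convergence $\mu_n\to\mu$ means $\int f\,d\mu_n\to\int f\,d\mu$ for all continuous $f$ with compact support. $\{\mu_n\}$ is bounded on compact sets if $\sup_n|\mu_n|(K)<\infty$ for every compact $K\subset\mathbb{R}$. $\{\mu_n\}$ has no mass at a point $x\in\mathbb{R}$ if for every $\varepsilon>0$ there is an open neighbourhood $N$ of $x$ with $\limsup_{n\to\infty}|\mu_n|(N)\le\varepsilon$. *)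

(* Defs.v *)
From HB Require Import structures.
From mathcomp Require Import all_boot all_order all_algebra.
From mathcomp Require Import all_classical all_reals all_analysis.
Set Implicit Arguments. Unset Strict Implicit. Unset Printing Implicit Defensive.
Import Order.TTheory GRing.Theory Num.Theory.
Import numFieldNormedType.Exports.
Local Open Scope classical_set_scope.
Local Open Scope ring_scope.

(* A finite signed Borel measure on R is a (real-valued, countably additive)
   charge on the Borel sets of R. *)
Notation signed_measure R := ({charge set (R : realType) -> \bar R}).

Section defs.
Context {R : realType}.

Definition hahnP (nu : signed_measure R) :
  {PN : set R * set R | hahn_decomposition nu PN.1 PN.2}.
Proof.
apply: cid; have [P [N h]] := Hahn_decomposition nu; by exists (P, N).
Defined.

(* the variation measure |nu| (independent of the chosen Hahn decomposition) *)
Definition var_measure (nu : signed_measure R) : set R -> \bar R :=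
  charge_variation (proj2_sig (hahnP nu)).

Definition sintegral (nu : signed_measure R) (f : R -> R) : R :=
  fine (\int[jordan_pos (proj2_sig (hahnP nu))]_x (f x)%:E)
  - fine (\int[jordan_neg (proj2_sig (hahnP nu))]_x (f x)%:E).

Definition Cc (f : R -> R) : Prop :=
  continuous f /\ exists K : set R, compact K /\ forall x, ~ K x -> f x = 0.

Definition vague_cvg (mu_ : nat -> signed_measure R) (mu : signed_measure R) :=
  forall f, Cc f -> sintegral (mu_ n) f @[n --> \oo] --> sintegral mu f.

Definition cont_pt (mu : signed_measure R) (x : R) : Prop := mu [set x] = 0%E.

Definition Fdist (mu : signed_measure R) (alpha : \bar R) (x : R) : R :=
  match alpha with
  | EFin a => if a <= x then fine (mu `]a, x]%classic) else - fine (mu `]x, a]%classic)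
  | -oo%E => fine (mu `]-oo, x]%classic)
  | +oo%E => - fine (mu `]x, +oo[%classic)
  end.

Definition bounded_on_compacts (mu_ : nat -> signed_measure R) : Prop :=
  forall K : set R, compact K -> exists M : R, forall n, (var_measure (mu_ n) K <= M%:E)%E.

Definition no_mass_at (mu_ : nat -> signed_measure R) (x : R) : Prop :=
  forall eps : R, 0 < eps -> exists N : set R,
    [/\ open N, N x & (limn_esup (fun n => var_measure (mu_ n) N) <= eps%:E)%E].

Definition no_mass_at_minfty (mu_ : nat -> signed_measure R) : Prop :=
  forall eps : R, 0 < eps -> exists c : R,
    (limn_esup (fun n => var_measure (mu_ n) `]-oo, c[%classic) <= eps%:E)%E.

Definition no_mass_at_pinfty (mu_ : nat -> signed_measure R) : Prop :=
  forall eps : R, 0 < eps -> exists c : R,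
    (limn_esup (fun n => var_measure (mu_ n) `]c, +oo[%classic) <= eps%:E)%E.

Definition Fdist_cvg (mu_ : nat -> signed_measure R) (mu : signed_measure R)
    (alpha : \bar R) : Prop :=
  forall x, cont_pt mu x -> Fdist (mu_ n) alpha x @[n --> \oo] --> Fdist mu alpha x.

End defs.

(* Main.v *)
Require Import Defs.
From HB Require Import structures.
From mathcomp Require Import all_boot all_order all_algebra.
From mathcomp Require Import all_classical all_reals all_analysis.
From mathcomp Require Import measurable_realfun.
From mathcomp Require Import ring lra.
Import Order.TTheory GRing.Theory Num.Theory.
Import numFieldNormedType.Exports.
Local Open Scope classical_set_scope.
Local Open Scope ring_scope.

Set Implicit Arguments. Unset Strict Implicit. Unset Printing Implicit Defensive.

Section basics.
Context {R : realType}.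
Implicit Types (nu : signed_measure R) (A B : set R) (f g : R -> R).

Definition Pm nu := jordan_pos (proj2_sig (hahnP nu)).
Definition Nm nu := jordan_neg (proj2_sig (hahnP nu)).

Lemma varE nu A : var_measure nu A = (Pm nu A + Nm nu A)%E.
Proof. by []. Qed.

Lemma nuE nu A : measurable A -> nu A = (Pm nu A - Nm nu A)%E.
Proof.
move=> mA; rewrite (jordan_decomp (proj2_sig (hahnP nu)) mA).
rewrite /cadd /=; congr (_ + _)%E; exact: mulN1e.
Qed.

Lemma fine_nu nu A : measurable A -> fine (nu A) = fine (Pm nu A) - fine (Nm nu A).
Proof.
move=> mA; rewrite nuE // fineB //; exact: fin_num_measure.
Qed.

Lemma fine_var nu A : measurable A ->
  fine (var_measure nu A) = fine (Pm nu A) + fine (Nm nu A).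
Proof. move=> mA; rewrite varE fineD //; exact: fin_num_measure. Qed.

Lemma fine_var_ge0 nu A : 0 <= fine (var_measure nu A).
Proof. by rewrite fine_ge0 // varE adde_ge0. Qed.

Lemma var_fin nu A : measurable A -> var_measure nu A \is a fin_num.
Proof. by move=> mA; rewrite varE fin_numD !fin_num_measure. Qed.

Lemma abs_nu_le nu A : measurable A -> `|fine (nu A)| <= fine (var_measure nu A).
Proof.
move=> mA; rewrite fine_nu // fine_var //.
have h1 : 0 <= fine (Pm nu A) by rewrite fine_ge0.
have h2 : 0 <= fine (Nm nu A) by rewrite fine_ge0.
by rewrite (le_trans (ler_normB _ _)) // !ger0_norm.
Qed.

Lemma le_var nu A B : measurable A -> measurable B -> A `<=` B ->
  fine (var_measure nu A) <= fine (var_measure nu B).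
Proof.
move=> mA mB AB; rewrite fine_le ?var_fin //.
by rewrite !varE leeD // le_measure // inE.
Qed.

Definition good f := measurable_fun setT f /\ exists M, forall x, `|f x| <= M.

Lemma good_int (m : {finite_measure set R -> \bar R}) f : good f ->
  m.-integrable setT (EFin \o f).
Proof.
move=> [mf [M hM]].
apply: (@le_integrable _ _ _ m setT measurableT (EFin \o f) (EFin \o cst M)).
- exact/measurable_EFinP.
- move=> x _ /=; rewrite lee_fin (le_trans (hM x)) //.
  exact: ler_norm.
- exact: finite_measure_integrable_cst.
Qed.

Lemma goodB f g : good f -> good g -> good (fun x => f x - g x).
Proof.
move=> [mf [M hM]] [mg [N hN]]; split; first exact: measurable_funB.
exists (M + N) => x; rewrite (le_trans (ler_normB _ _)) // lerD //.
Qed.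

Lemma good_indic A : measurable A -> good (\1_A).
Proof.
move=> mA; split; first exact: measurable_indic.
by exists 1 => x; rewrite /indic; case: (_ \in _); rewrite ?normr1 ?normr0.
Qed.

Lemma goodZ c f : good f -> good (fun x => c * f x).
Proof.
move=> [mf [M hM]]; split; first exact: measurable_funM.
by exists (`|c| * M) => x; rewrite normrM ler_wpM2l.
Qed.

Lemma goodD f g : good f -> good g -> good (fun x => f x + g x).
Proof.
move=> [mf [M hM]] [mg [N hN]]; split; first exact: measurable_funD.
exists (M + N) => x; rewrite (le_trans (ler_normD _ _)) // lerD //.
Qed.

Lemma Rint_indic (m : {finite_measure set R -> \bar R}) A : measurable A ->
  Rintegral m setT (\1_A) = fine (m A).
Proof. by move=> mA; rewrite /Rintegral integral_indic // setIT. Qed.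

Lemma Rint_step (m : {finite_measure set R -> \bar R}) k (c : nat -> R)
  (S : nat -> set R) : (forall i, measurable (S i)) ->
  Rintegral m setT (fun x => \sum_(i < k) c i * \1_(S i) x) =
  \sum_(i < k) c i * fine (m (S i)).
Proof.
move=> mS; elim: k => [|k IH].
  rewrite big_ord0.
  rewrite (_ : (fun x => _) = fun=> 0); last by apply: funext => x; rewrite big_ord0.
  by rewrite Rintegral_cst // mul0r.
rewrite big_ord_recr /=.
rewrite (_ : (fun x => _) = fun x => \sum_(i < k) c i * \1_(S i) x + c k * \1_(S k) x);
  last by apply: funext => x; rewrite big_ord_recr.
have gs : forall k, good (fun x => \sum_(i < k) c i * \1_(S i) x).
  elim => [|j IHj].
    split; first by under eq_fun do rewrite big_ord0; exact: measurable_cst.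
    by exists 0 => x; rewrite big_ord0 normr0.
  under [X in good X]eq_fun do rewrite big_ord_recr /=.
  by apply: goodD => //; apply: goodZ; exact: good_indic.
rewrite RintegralD //; last 2 first.
- exact: good_int.
- by apply: good_int; apply: goodZ; exact: good_indic.
by rewrite IH RintegralZl ?Rint_indic //; apply: good_int; exact: good_indic.
Qed.

Lemma sintE nu f : Defs.sintegral nu f = Rintegral (Pm nu) setT f - Rintegral (Nm nu) setT f.
Proof. by []. Qed.

Lemma sint_step nu k (c : nat -> R) (S : nat -> set R) :
  (forall i, measurable (S i)) ->
  Defs.sintegral nu (fun x => \sum_(i < k) c i * \1_(S i) x) =
  \sum_(i < k) c i * fine (nu (S i)).
Proof.
move=> mS; rewrite sintE !Rint_step // -sumrB; apply: eq_bigr => i _.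
by rewrite fine_nu // mulrBr.
Qed.

Lemma sintB nu f g : good f -> good g ->
  Defs.sintegral nu (fun x => f x - g x) = Defs.sintegral nu f - Defs.sintegral nu g.
Proof.
move=> gf gg; rewrite !sintE !RintegralB //; try exact: good_int.
ring.
Qed.

Lemma Rint_bound (m : {finite_measure set R -> \bar R}) h e A :
  good h -> measurable A -> (forall x, `|h x| <= e * \1_A x) ->
  `|Rintegral m setT h| <= e * fine (m A).
Proof.
move=> gh mA hb.
rewrite (le_trans (le_normr_Rintegral _ _)) //; first exact: good_int.
rewrite -Rint_indic // -RintegralZl //; last by apply: good_int; exact: good_indic.
apply: le_Rintegral => //.
- apply: good_int; case: gh => mh [M hM]; split; first exact: measurableT_comp.
  by exists M => x; rewrite normr_id.
- by apply: good_int; apply: goodZ; exact: good_indic.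
Qed.

Lemma sint_bound nu h e A :
  good h -> measurable A -> (forall x, `|h x| <= e * \1_A x) ->
  `|Defs.sintegral nu h| <= e * fine (var_measure nu A).
Proof.
move=> gh mA hb; rewrite sintE fine_var // mulrDr.
rewrite (le_trans (ler_normB _ _)) // lerD //; exact: Rint_bound.
Qed.

End basics.

Section itv.
Context {R : realType}.
Implicit Types (nu : signed_measure R).

Lemma itv_split nu (a x y : itv_bound R) : (a <= x)%O -> (x <= y)%O ->
  fine (nu [set` Interval a y]) =
  fine (nu [set` Interval a x]) + fine (nu [set` Interval x y]).
Proof.
move=> ax xy; rewrite (itv_bndbnd_setU ax xy) chargeU //.
- rewrite fineD //; exact: fin_num_measure.
- apply/seteqP; split => z //= [].
  rewrite !in_itv => /andP[_ h1] /andP[h2 _].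
  case: x h1 h2 {ax xy} => [[] u|[]] //=.
  + by move=> h1 h2; have := le_lt_trans h2 h1; rewrite ltxx.
  + by move=> h1 h2; have := lt_le_trans h2 h1; rewrite ltxx.
Qed.


Lemma Fdist_diff nu (al : \bar R) a b : a <= b ->
  fine (nu `]a, b]%classic) = Fdist nu al b - Fdist nu al a.
Proof.
move=> ab; case: al => [c| |] /=.
- have [ca|ac] := leP c a.
  + rewrite (le_trans ca ab).
    rewrite (@itv_split nu (BRight c) (BRight a) (BRight b)) ?bnd_simp //.
    ring.
  + idtac.
    have [cb|bc] := leP c b.
    * rewrite (@itv_split nu (BRight a) (BRight c) (BRight b)) ?bnd_simp //;
        last exact: ltW.
      ring.
    * rewrite (@itv_split nu (BRight a) (BRight b) (BRight c)) ?bnd_simp //;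
        last exact: ltW.
      ring.
- rewrite (@itv_split nu (BRight a) (BRight b) +oo%O) ?bnd_simp //.
  ring.
- rewrite (@itv_split nu -oo%O (BRight a) (BRight b)) ?bnd_simp //.
  ring.
Qed.

End itv.

Section atoms.
Context {R : realType}.

Lemma atoms_countable (m : {finite_measure set R -> \bar R}) :
  countable [set r | 0 < fine (m [set r])].
Proof.
set Mt := fine (m setT).
have Mfin : m setT \is a fin_num by exact: fin_num_measure.
rewrite [X in countable X](_ : _ =
    \bigcup_n [set r | Mt * n.+1%:R^-1 < fine (m [set r])]); last first.
  apply/seteqP; split => [r /= r0|r /= [k _] h].
    have Mge : fine (m [set r]) <= Mt.
      by rewrite fine_le ?fin_num_measure // le_measure // inE.
    have Mt0 : 0 < Mt by exact: lt_le_trans Mge.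
    have [k hk] := @ltr_add_invr R 0 (fine (m [set r]) / Mt) (divr_gt0 r0 Mt0).
    exists k => //=; rewrite add0r in hk.
    by rewrite mulrC -ltr_pdivlMr.
  apply: le_lt_trans h; rewrite mulr_ge0 // fine_ge0 //.
apply: bigcup_countable => // n _; apply: finite_set_countable.
apply: contrapT => /infiniteP/pcard_leP/injfunPex[/= q q_fun q_inj].
have mU : measurable (\bigcup_k [set q k]).
  by apply: bigcup_measurable => k _; exact: measurable_set1.
have : (m (\bigcup_k [set q k]) <= m setT)%E by rewrite le_measure // inE.
rewrite leNgt => /negP; apply.
rewrite [ltRHS](_ : _ = \sum_(0 <= k <oo) m [set q k])%E; last first.
  rewrite measure_bigcup//; first by apply: eq_eseriesl =>// i; rewrite in_setT.
  apply/trivIsetP => i j _ _ ij; apply/seteqP; split => // z /= [-> ].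
  by move/q_inj => /(_ (in_setT _) (in_setT _)) /eqP; rewrite (negbTE ij).
apply: (lt_le_trans _ (nneseries_lim_ge n.+1 _)) => //.
rewrite -(fineK Mfin) -EFin_sum_fine//; last by move=> ? _; rewrite fin_num_measure.
rewrite -/Mt lte_fin (_ : Mt = (\sum_(0 <= k < n.+1) Mt * n.+1%:R^-1:R)%R); last first.
  by rewrite sumr_const_nat subn0 -[RHS]mulr_natr -mulrA mulVf ?mulr1.
by apply: ltr_sum => // k _; exact: q_fun.
Qed.

Lemma exists_cont_pt (nu : signed_measure R) a b : a < b ->
  exists x, a < x < b /\ cont_pt nu x.
Proof.
move=> ab; apply: contrapT => hn.
pose S := [set r | 0 < fine (Pm nu [set r])] `|` [set r | 0 < fine (Nm nu [set r])].
have cS : countable S.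
  rewrite /S -bigcup2E; apply: bigcup_countable => // -[|[|i]] _ /=;
    [exact: atoms_countable|exact: atoms_countable|exact: countable0].
have sub : `]a, b[%classic `<=` S.
  move=> x /= xab; apply: contrapT => nS; apply: hn; exists x; split.
    by rewrite in_itv /= in xab.
  rewrite /cont_pt nuE //.
  have h1 : Pm nu [set x] = 0%E.
    have f1 : fine (Pm nu [set x]) = 0.
      apply/eqP; rewrite eq_le fine_ge0 ?measure_ge0 // andbT leNgt.
      by apply/negP => h; apply: nS; left.
    by rewrite -(@fineK _ (Pm nu [set x])) ?fin_num_measure // f1.
  have h2 : Nm nu [set x] = 0%E.
    have f1 : fine (Nm nu [set x]) = 0.
      apply/eqP; rewrite eq_le fine_ge0 ?measure_ge0 // andbT leNgt.
      by apply/negP => h; apply: nS; right.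
    by rewrite -(@fineK _ (Nm nu [set x])) ?fin_num_measure // f1.
  by rewrite h1 h2 sube0.
have := countable_lebesgue_measure0 cS.
have : (lebesgue_measure (`]a, b[%classic : set R) <= lebesgue_measure S)%E.
  by apply: le_measure => //; rewrite inE //; exact: countable_measurable.
move=> /[swap] ->; rewrite lebesgue_measure_itv /= lte_fin ab.
by rewrite -EFinB lee_fin leNgt subr_gt0 ab.
Qed.

End atoms.

Section partb.
Context {R : realType}.
Implicit Types (nu : signed_measure R).

Lemma Cc_good (f : R -> R) : Cc f -> good f.
Proof.
move=> [cf [K [cK fK]]]; split; first exact: continuous_measurable_fun.
have cfK : compact (f @` K).
  by apply: continuous_compact => //; exact: continuous_subspaceT.
have [M [_ hM]] := compact_bounded cfK.
exists (`|M| + 1) => x.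
have [Kx|nKx] := pselect (K x).
  by apply: hM; [rewrite ltr_pwDr // ler_norm|exists x].
by rewrite fK // normr0 addr_ge0.
Qed.

Lemma sint_indic nu A : measurable A -> Defs.sintegral nu (\1_A) = fine (nu A).
Proof. by move=> mA; rewrite sintE !Rint_indic // fine_nu. Qed.

Lemma B_gen (mu_ : nat -> signed_measure R) mu (B : set R) :
  measurable B -> vague_cvg mu_ mu ->
  (forall eps, 0 < eps -> exists f E, [/\ Cc f, measurable E,
     (forall x, `|\1_B x - f x| <= \1_E x),
     (\forall n \near \oo, fine (var_measure (mu_ n) E) <= eps) &
     fine (var_measure mu E) <= eps]) ->
  fine (mu_ n B) @[n --> \oo] --> fine (mu B).
Proof.
move=> mB vc H; apply/cvgrPdist_le => e e0.
have e30 : 0 < e / 3 by rewrite divr_gt0.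
have [f [E [cf mE hfE hn hm]]] := H _ e30.
have gf := Cc_good cf.
have gB := good_indic mB.
have bnd nu : `|fine (nu B) - Defs.sintegral nu f| <= fine (var_measure nu E).
  rewrite -sint_indic // -sintB // -[X in _ <= X]mul1r.
  apply: sint_bound => //; first exact: goodB.
  by move=> x; rewrite mul1r.
have := vc f cf; move/cvgrPdist_le => /(_ _ e30) hv.
near=> n.
have h1 := bnd mu; have h2 := bnd (mu_ n).
have h3 : fine (var_measure (mu_ n) E) <= e / 3 by near: n.
have h4 : `|Defs.sintegral mu f - Defs.sintegral (mu_ n) f| <= e / 3 by near: n.
set a := fine (mu B) in h1 *; set b := fine (mu_ n B) in h2 *.
set c := Defs.sintegral mu f in h1 h4 *; set d := Defs.sintegral (mu_ n) f in h2 h4 *.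
have -> : a - b = (a - c) + (c - d) - (b - d) by ring.
rewrite (le_trans (ler_normB _ _)) // (le_trans (lerD (ler_normD _ _) (lexx _))) //.
have -> : e = e / 3 + e / 3 + e / 3 by field.
rewrite lerD // ?lerD //; [exact: le_trans h1 hm|exact: le_trans h2 h3].
Unshelve. all: end_near. Qed.

End partb.

Section tools.
Context {R : realType}.
Implicit Types (nu : signed_measure R).

Lemma esup_ev (u : (\bar R)^nat) (l : R) : (limn_esup u < l%:E)%E ->
  \forall n \near \oo, (u n < l%:E)%E.
Proof.
rewrite /limn_esup /limf_esup => /ereal_inf_lt [_ [V FV <-]] h.
apply: filterS FV => n Vn; apply: le_lt_trans h.
by apply: ereal_sup_ubound; exists n.
Qed.

Lemma esup_ev_fine (mu_ : nat -> signed_measure R) (A : set R) (eps : R) :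
  measurable A -> 0 < eps ->
  (limn_esup (fun n => var_measure (mu_ n) A) <= eps%:E)%E ->
  \forall n \near \oo, fine (var_measure (mu_ n) A) <= eps *+ 2.
Proof.
move=> mA e0 h.
have : (limn_esup (fun n => var_measure (mu_ n) A) < (eps *+ 2)%:E)%E.
  by apply: (le_lt_trans h); rewrite lte_fin mulr2n ltrDr.
move/esup_ev; apply: filterS => n h2.
rewrite -lee_fin fineK ?var_fin //; exact: ltW.
Qed.

Definition Vm nu := charge_variation (proj2_sig (hahnP nu)).

Lemma VmE nu A : var_measure nu A = Vm nu A.
Proof. by []. Qed.

Lemma var_small_seq nu (F : nat -> set R) :
  (forall k, measurable (F k)) -> nonincreasing_seq F ->
  measurable (\bigcap_k F k) -> var_measure nu (\bigcap_k F k) = 0%E ->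
  forall eps, 0 < eps -> exists k, forall k', (k <= k')%N ->
    fine (var_measure nu (F k')) <= eps.
Proof.
move=> mF nF mI h0 eps e0.
have F0 : (Vm nu (F 0%N) < +oo)%E by rewrite -VmE ltey_eq var_fin.
have hc := @nonincreasing_cvg_mu _ _ R (Vm nu) F F0 mF mI nF.
have hc' : (fun k => var_measure nu (F k)) @ \oo --> var_measure nu (\bigcap_k F k) := hc.
rewrite h0 in hc'.
move: hc' => /fine_cvgP [_] /cvgrPdist_le /(_ _ e0) [k _ hk].
exists k => k' kk'; have := hk k' kk'; rewrite sub0r normrN /=.
by rewrite ger0_norm // fine_var_ge0.
Qed.

Lemma var_set1 nu x : cont_pt nu x -> var_measure nu [set x] = 0%E.
Proof.
move=> cx; rewrite varE /Pm /Nm jordan_posE jordan_negE cjordan_posE cjordan_negE.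
rewrite /crestr0 mem_set // /crestr.
set P := (proj1_sig (hahnP nu)).1; set N := (proj1_sig (hahnP nu)).2.
have h (S : set R) : nu ([set x] `&` S) = 0%E.
  have [Sx|nSx] := pselect (S x).
    by rewrite (_ : _ `&` _ = [set x]) //; apply/seteqP; split => z //= [-> //].
  rewrite (_ : _ `&` _ = set0) ?charge0 //; apply/seteqP; split => z //= [-> //].
by rewrite !h oppe0 adde0.
Qed.

Lemma open_itv (N : set R) x : open N -> N x ->
  exists2 d, 0 < d & `]x - d, x + d[%classic `<=` N.
Proof.
move=> oN Nx; have : nbhs x N by apply: open_nbhs_nbhs; split.
move=> /nbhs_ballP [d d0 hd]; exists d => // y /=; rewrite in_itv /= => /andP[h1 h2].
apply: hd; rewrite -ball_normE /=.
rewrite ltr_norml; apply/andP; split; lra.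
Qed.

End tools.

Section clamp.
Context {R : realType}.

Definition clamp (u : R) : R := Num.max 0 (Num.min 1 u).

Lemma clamp_ge0 u : 0 <= clamp u.
Proof. by rewrite /clamp le_max lexx. Qed.

Lemma clamp_le1 u : clamp u <= 1.
Proof. by rewrite /clamp ge_max ler01 ge_min lexx. Qed.

Lemma clamp0 u : u <= 0 -> clamp u = 0.
Proof.
move=> u0; rewrite /clamp; apply/eqP; rewrite eq_le ge_max le_max !lexx /=.
by rewrite ge_min u0 orbT.
Qed.

Lemma clamp1 u : 1 <= u -> clamp u = 1.
Proof.
move=> u1; rewrite /clamp (_ : Num.min 1 u = 1); last first.
  by apply/eqP; rewrite eq_le ge_min lexx le_min lexx u1.
by apply/eqP; rewrite eq_le ge_max ler01 lexx le_max lexx orbT.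
Qed.

Lemma clamp_cont : continuous clamp.
Proof.
have -> : clamp = (cst 0) \max ((cst 1) \min idfun).
  by apply: funext => u.
move=> u; apply: continuous_max; first exact: cvg_cst.
apply: continuous_min; [exact: cvg_cst|exact: cvg_id].
Qed.

Lemma affine_cont (p q : R) : continuous (fun t : R => p * t + q).
Proof.
move=> t; apply: cvgD; last exact: cvg_cst.
apply: cvgM; [exact: cvg_cst|exact: cvg_id].
Qed.

Definition bump (p1 q1 p2 q2 : R) (t : R) :=
  Num.min (clamp (p1 * t + q1)) (clamp (p2 * t + q2)).

Lemma bump_01 p1 q1 p2 q2 t : 0 <= bump p1 q1 p2 q2 t <= 1.
Proof.
rewrite /bump le_min !clamp_ge0 /= ge_min clamp_le1 //.
Qed.

Lemma bump0 p1 q1 p2 q2 t : p1 * t + q1 <= 0 \/ p2 * t + q2 <= 0 ->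
  bump p1 q1 p2 q2 t = 0.
Proof.
move=> h; apply/eqP; rewrite eq_le; have := bump_01 p1 q1 p2 q2 t.
move=> /andP[-> _]; rewrite andbT /bump ge_min.
by case: h => h; rewrite (clamp0 h) lexx ?orbT.
Qed.

Lemma bump1 p1 q1 p2 q2 t : 1 <= p1 * t + q1 -> 1 <= p2 * t + q2 ->
  bump p1 q1 p2 q2 t = 1.
Proof. by move=> h1 h2; rewrite /bump !clamp1 // minxx. Qed.

Lemma bump_cont p1 q1 p2 q2 : continuous (bump p1 q1 p2 q2).
Proof.
have -> : bump p1 q1 p2 q2 = (clamp \o (fun t => p1 * t + q1)) \min
    (clamp \o (fun t => p2 * t + q2)) by apply: funext.
move=> t; apply: continuous_min.
- apply: continuous_comp; [exact: affine_cont|exact: clamp_cont].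
- apply: continuous_comp; [exact: affine_cont|exact: clamp_cont].
Qed.

Lemma bump_Cc p1 q1 p2 q2 : 0 < p1 -> p2 < 0 -> Cc (bump p1 q1 p2 q2).
Proof.
move=> p10 p20; split; first exact: bump_cont.
exists `[- q1 / p1, - q2 / p2]%classic; split; first exact: segment_compact.
move=> x /=; rewrite in_itv /= => /negP; rewrite negb_and -!ltNge => /orP[h|h];
  apply: bump0.
  left; have -> : p1 * x + q1 = p1 * (x - (- q1 / p1)).
    by field; rewrite gt_eqF.
  by rewrite pmulr_rle0 // subr_le0 ltW.
right; have -> : p2 * x + q2 = p2 * (x - (- q2 / p2)).
  by field; rewrite lt_eqF.
by rewrite nmulr_rle0 // subr_ge0 ltW.
Qed.

Lemma ind_bound (B E : set R) (f : R -> R) :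
  (forall x, 0 <= f x <= 1) -> (forall x, ~ E x -> f x = \1_B x) ->
  forall x, `|\1_B x - f x| <= \1_E x.
Proof.
move=> f01 fE x; have [Ex|nEx] := pselect (E x).
  rewrite [X in _ <= X]indicE mem_set //=.
  case/andP: (f01 x) => h1 h2.
  have h3 : 0 <= (\1_B x : R) by rewrite /indic; case: (_ \in _); rewrite ?lexx ?ler01.
  have h4 : (\1_B x : R) <= 1 by rewrite /indic; case: (_ \in _); rewrite ?lexx ?ler01.
  rewrite ler_norml; apply/andP; split; lra.
by rewrite fE // subrr normr0.
Qed.

End clamp.

Section small.
Context {R : realType}.
Implicit Types (nu : signed_measure R).

Lemma var_U nu A B : measurable A -> measurable B ->
  fine (var_measure nu (A `|` B)) <= fine (var_measure nu A) + fine (var_measure nu B).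
Proof.
move=> mA mB; rewrite -fineD ?var_fin //.
rewrite fine_le ?var_fin ?fin_numD ?var_fin //; first exact: measurableU.
  by rewrite !fin_num_measure.
exact: (measureU2 (Vm nu) mA mB).
Qed.

Lemma var_small_pt nu x : cont_pt nu x -> forall eps, 0 < eps ->
  exists2 d, 0 < d & fine (var_measure nu `]x - d, x + d[%classic) <= eps.
Proof.
move=> cx eps e0.
pose F k := `]x - k.+1%:R^-1, x + k.+1%:R^-1[%classic : set R.
have FI : \bigcap_k F k = [set x].
  apply/seteqP; split => [y Fy|y ->]; last first.
    move=> k _; rewrite /F /= in_itv /=; apply/andP; split.
      by rewrite ltrBlDr ltrDl.
    by rewrite ltrDl.
  apply: contrapT => yx.
  have d0 : 0 < `|y - x| by rewrite normr_gt0 subr_eq0; apply/eqP.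
  have [k hk] := ltr_add_invr d0; rewrite add0r in hk.
  have := Fy k Logic.I; rewrite /F /= in_itv /= => /andP[h1 h2].
  have : `|y - x| < k.+1%:R^-1.
    set t := k.+1%:R^-1 in h1 h2 *.
    rewrite ltr_norml; apply/andP; split; lra.
  by move=> h; have := lt_trans h hk; rewrite ltxx.
have [||||k hk] := @var_small_seq _ nu F _ _ _ _ eps e0.
- by move=> k; exact: measurable_itv.
- move=> m n mn; apply/subsetPset => y; rewrite /F /= !in_itv /= => /andP[h1 h2].
  have : n.+1%:R^-1 <= m.+1%:R^-1 :> R.
    by rewrite lef_pV2 ?posrE // ler_nat ltnS.
  set t := n.+1%:R^-1; set u := m.+1%:R^-1.
  move=> h; rewrite -/t -/u in h1 h2 *; apply/andP; split; lra.
- by rewrite FI; exact: measurable_set1.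
- by rewrite FI; exact: var_set1.
- by exists k.+1%:R^-1 => //; exact: hk.
Qed.

Lemma var_small_minfty nu eps : 0 < eps ->
  exists k : nat, forall c, c <= - k%:R -> fine (var_measure nu `]-oo, c[%classic) <= eps.
Proof.
move=> e0.
pose F k := `]-oo, - k%:R[%classic : set R.
have FI : \bigcap_k F k = set0.
  apply/seteqP; split => [y Fy|//].
  have := Fy (Num.truncn (- y)).+1 Logic.I; rewrite /F /= in_itv /= ltrNr.
  have := truncnS_gt (- y); move=> h1 h2; have := lt_trans h1 h2; by rewrite ltxx.
have [||||k hk] := @var_small_seq _ nu F _ _ _ _ eps e0.
- by move=> k; exact: measurable_itv.
- move=> m n mn; apply/subsetPset => y; rewrite /F /= !in_itv /= => h.
  have : (m%:R : R) <= n%:R by rewrite ler_nat.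
  move=> h'; lra.
- by rewrite FI.
- by rewrite FI varE /Pm /Nm !measure0 adde0.
- exists k => c ck; apply: le_trans (hk k (leqnn k)).
  apply: le_var; try exact: measurable_itv.
  by move=> y /=; rewrite !in_itv /= => h; exact: lt_le_trans h ck.
Qed.

Lemma var_small_pinfty nu eps : 0 < eps ->
  exists k : nat, forall c, k%:R <= c -> fine (var_measure nu `]c, +oo[%classic) <= eps.
Proof.
move=> e0.
pose F k := `]k%:R, +oo[%classic : set R.
have FI : \bigcap_k F k = set0.
  apply/seteqP; split => [y Fy|//].
  have := Fy (Num.truncn y).+1 Logic.I; rewrite /F /= in_itv /= andbT.
  have := truncnS_gt y; move=> h1 h2; have := lt_trans h1 h2; by rewrite ltxx.
have [||||k hk] := @var_small_seq _ nu F _ _ _ _ eps e0.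
- by move=> k; exact: measurable_itv.
- move=> m n mn; apply/subsetPset => y; rewrite /F /= !in_itv /= !andbT => h.
  have : (m%:R : R) <= n%:R by rewrite ler_nat.
  move=> h'; lra.
- by rewrite FI.
- by rewrite FI varE /Pm /Nm !measure0 adde0.
- exists k => c ck; apply: le_trans (hk k (leqnn k)).
  apply: le_var; try exact: measurable_itv.
  move=> y /=; rewrite !in_itv /= !andbT => h.
  by rewrite /F /= in_itv /= andbT (le_lt_trans ck h).
Qed.

End small.

Section partb2.
Context {R : realType}.
Implicit Types (nu : signed_measure R).

Lemma notin_ball (c d x : R) : ~ `]c - d, c + d[%classic x -> x <= c - d \/ c + d <= x.
Proof.
move=> h; have [xc|xc] := leP x (c - d); first by left.
have [cx|cx] := leP (c + d) x; first by right.
by exfalso; apply: h; rewrite /= in_itv /= xc cx.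
Qed.

Lemma aff1 (d x a : R) : d^-1 * x + (- a / d) = (x - a) / d.
Proof. by rewrite mulrC mulNr -mulrBl. Qed.

Lemma aff2 (d x b : R) : - d^-1 * x + (b / d) = (b - x) / d.
Proof. by rewrite mulNr mulrC addrC -mulrBl. Qed.

Lemma le0_div (d u : R) : 0 < d -> (u / d <= 0) = (u <= 0).
Proof. by move=> d0; rewrite pmulr_lle0 // invr_gt0. Qed.

Lemma ge1_div (d u : R) : 0 < d -> (1 <= u / d) = (d <= u).
Proof. by move=> d0; rewrite ler_pdivlMr // mul1r. Qed.

Lemma b_itv (mu_ : nat -> signed_measure R) mu a b :
  vague_cvg mu_ mu -> cont_pt mu a -> cont_pt mu b ->
  no_mass_at mu_ a -> no_mass_at mu_ b ->
  fine (mu_ n `]a, b]%classic) @[n --> \oo] --> fine (mu `]a, b]%classic).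
Proof.
move=> vc ca cb na nb; apply: (B_gen (measurable_itv _) vc).
move=> eps e0; pose e := eps / 4; have e4 : 0 < e by rewrite divr_gt0.
have [Na [oNa Naa hNa]] := na e e4.
have [Nb [oNb Nbb hNb]] := nb e e4.
have [da da0 hda] := open_itv oNa Naa.
have [db db0 hdb] := open_itv oNb Nbb.
have [ma ma0 hma] := var_small_pt ca e4.
have [mb mb0 hmb] := var_small_pt cb e4.
pose d := Num.min (Num.min da db) (Num.min ma mb).
have d0 : 0 < d by rewrite !lt_min da0 db0 ma0 mb0.
have dda : d <= da by rewrite !ge_min lexx.
have ddb : d <= db by rewrite !ge_min lexx orbT.
have dma : d <= ma by rewrite !ge_min lexx !orbT.
have dmb : d <= mb by rewrite !ge_min lexx !orbT.
have sub (c r rr : R) : r <= rr -> `]c - r, c + r[%classic `<=` `]c - rr, c + rr[%classic.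
  by move=> hr y /=; rewrite !in_itv /= => /andP[h1 h2]; apply/andP; split; lra.
have mI (c r : R) : measurable (`]c - r, c + r[%classic : set R) by exact: measurable_itv.
exists (bump d^-1 (- a / d) (- d^-1) (b / d)),
  (`]a - d, a + d[%classic `|` `]b - d, b + d[%classic); split.
- by apply: bump_Cc; rewrite ?oppr_lt0 invr_gt0.
- exact: measurableU.
- apply: ind_bound; first exact: bump_01.
  move=> x nE.
  have /notin_ball h1 : ~ `]a - d, a + d[%classic x by move=> h; apply: nE; left.
  have /notin_ball h2 : ~ `]b - d, b + d[%classic x by move=> h; apply: nE; right.
  rewrite /indic (_ : (x \in _) = (a < x <= b)); last first.
    by apply/idP/idP => [/set_mem|h]; [rewrite /= in_itv|apply/mem_set; rewrite /= in_itv].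
  have [xa|ax] := leP x a.
    by rewrite bump0 //; left; rewrite aff1 le0_div // subr_le0.
  have [xb|bx] := leP x b.
    rewrite bump1 //.
      by rewrite aff1 ge1_div //; case: h1 => h1; lra.
    by rewrite aff2 ge1_div //; case: h2 => h2; lra.
  by rewrite bump0 //; right; rewrite aff2 le0_div // subr_le0 ltW.
- have mNa : measurable Na by exact: open_measurable.
  have mNb : measurable Nb by exact: open_measurable.
  have := esup_ev_fine mNa e4 hNa; have := esup_ev_fine mNb e4 hNb.
  move=> hb ha; near=> n.
  have hb' : fine (var_measure (mu_ n) Nb) <= e *+ 2 by near: n.
  have ha' : fine (var_measure (mu_ n) Na) <= e *+ 2 by near: n.
  rewrite (le_trans (var_U _ (mI _ _) (mI _ _))) //.
  apply: (@le_trans _ _ (e *+ 2 + e *+ 2)); last by rewrite /e !mulr2n; lra.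
  apply: lerD.
    apply: le_trans ha'; apply: le_var => //; apply: subset_trans hda.
    exact: sub.
  apply: le_trans hb'; apply: le_var => //; apply: subset_trans hdb.
  exact: sub.
- rewrite (le_trans (var_U _ (mI _ _) (mI _ _))) //.
  apply: (@le_trans _ _ (e + e)); last by rewrite /e; lra.
  apply: lerD.
    apply: le_trans hma; exact: le_var (mI _ _) (mI _ _) (sub _ _ _ dma).
  apply: le_trans hmb; exact: le_var (mI _ _) (mI _ _) (sub _ _ _ dmb).
Unshelve. all: end_near. Qed.

Lemma b_minfty (mu_ : nat -> signed_measure R) mu b :
  vague_cvg mu_ mu -> no_mass_at_minfty mu_ -> cont_pt mu b ->
  no_mass_at mu_ b ->
  fine (mu_ n `]-oo, b]%classic) @[n --> \oo] --> fine (mu `]-oo, b]%classic).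
Proof.
move=> vc nm cb nb; apply: (B_gen (measurable_itv _) vc).
move=> eps e0; pose e := eps / 4; have e4 : 0 < e by rewrite divr_gt0.
have [c0 hc0] := nm e e4.
have [k hk] := var_small_minfty mu e4.
pose c := Num.min c0 (- k%:R).
have cc0 : c <= c0 by rewrite ge_min lexx.
have ck : c <= - k%:R by rewrite ge_min lexx orbT.
have [Nb [oNb Nbb hNb]] := nb e e4.
have [db db0 hdb] := open_itv oNb Nbb.
have [mb mb0 hmb] := var_small_pt cb e4.
pose d := Num.min db mb.
have d0 : 0 < d by rewrite !lt_min db0 mb0.
have ddb : d <= db by rewrite !ge_min lexx.
have dmb : d <= mb by rewrite !ge_min lexx orbT.
have sub (c' r rr : R) : r <= rr -> `]c' - r, c' + r[%classic `<=` `]c' - rr, c' + rr[%classic.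
  by move=> hr y /=; rewrite !in_itv /= => /andP[h1 h2]; apply/andP; split; lra.
have mI (c' r : R) : measurable (`]c' - r, c' + r[%classic : set R) by exact: measurable_itv.
have mL (c' : R) : measurable (`]-oo, c'[%classic : set R) by exact: measurable_itv.
exists (bump 1 (1 - c) (- d^-1) (b / d)),
  (`]-oo, c[%classic `|` `]b - d, b + d[%classic); split.
- by apply: bump_Cc; rewrite ?oppr_lt0 ?invr_gt0.
- exact: measurableU.
- apply: ind_bound; first exact: bump_01.
  move=> x nE.
  have h1 : c <= x.
    rewrite leNgt; apply/negP => h; apply: nE; left; by rewrite /= in_itv /= h.
  have /notin_ball h2 : ~ `]b - d, b + d[%classic x by move=> h; apply: nE; right.
  rewrite /indic (_ : (x \in _) = (x <= b)); last first.
    by apply/idP/idP => [/set_mem|h]; [rewrite /= in_itv|apply/mem_set; rewrite /= in_itv].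
  have [xb|bx] := leP x b.
    rewrite bump1 //.
      by rewrite mul1r; lra.
    by rewrite aff2 ge1_div //; case: h2 => h2; lra.
  by rewrite bump0 //; right; rewrite aff2 le0_div // subr_le0 ltW.
- have mNb : measurable Nb by exact: open_measurable.
  have := esup_ev_fine (mL c0) e4 hc0; have := esup_ev_fine mNb e4 hNb.
  move=> hb ha; near=> n.
  have hb' : fine (var_measure (mu_ n) Nb) <= e *+ 2 by near: n.
  have ha' : fine (var_measure (mu_ n) `]-oo, c0[%classic) <= e *+ 2 by near: n.
  rewrite (le_trans (var_U _ (mL _) (mI _ _))) //.
  apply: (@le_trans _ _ (e *+ 2 + e *+ 2)); last by rewrite /e !mulr2n; lra.
  apply: lerD.
    apply: le_trans ha'; apply: le_var => // y /=; rewrite !in_itv /= => h.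
    exact: lt_le_trans h cc0.
  apply: le_trans hb'; apply: le_var => //; apply: subset_trans hdb.
  exact: sub.
- rewrite (le_trans (var_U _ (mL _) (mI _ _))) //.
  apply: (@le_trans _ _ (e + e)); last by rewrite /e; lra.
  apply: lerD; first exact: hk.
  apply: le_trans hmb; exact: le_var (mI _ _) (mI _ _) (sub _ _ _ dmb).
Unshelve. all: end_near. Qed.

Lemma b_pinfty (mu_ : nat -> signed_measure R) mu a :
  vague_cvg mu_ mu -> no_mass_at_pinfty mu_ -> cont_pt mu a ->
  no_mass_at mu_ a ->
  fine (mu_ n `]a, +oo[%classic) @[n --> \oo] --> fine (mu `]a, +oo[%classic).
Proof.
move=> vc nm ca na; apply: (B_gen (measurable_itv _) vc).
move=> eps e0; pose e := eps / 4; have e4 : 0 < e by rewrite divr_gt0.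
have [c0 hc0] := nm e e4.
have [k hk] := var_small_pinfty mu e4.
pose c := Num.max c0 k%:R.
have cc0 : c0 <= c by rewrite le_max lexx.
have ck : k%:R <= c by rewrite le_max lexx orbT.
have [Na [oNa Naa hNa]] := na e e4.
have [da da0 hda] := open_itv oNa Naa.
have [ma ma0 hma] := var_small_pt ca e4.
pose d := Num.min da ma.
have d0 : 0 < d by rewrite !lt_min da0 ma0.
have dda : d <= da by rewrite !ge_min lexx.
have dma : d <= ma by rewrite !ge_min lexx orbT.
have sub (c' r rr : R) : r <= rr -> `]c' - r, c' + r[%classic `<=` `]c' - rr, c' + rr[%classic.
  by move=> hr y /=; rewrite !in_itv /= => /andP[h1 h2]; apply/andP; split; lra.
have mI (c' r : R) : measurable (`]c' - r, c' + r[%classic : set R) by exact: measurable_itv.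
have mL (c' : R) : measurable (`]c', +oo[%classic : set R) by exact: measurable_itv.
exists (bump d^-1 (- a / d) (-1) (c + 1)),
  (`]a - d, a + d[%classic `|` `]c, +oo[%classic); split.
- by apply: bump_Cc; rewrite ?oppr_lt0 ?invr_gt0.
- exact: measurableU.
- apply: ind_bound; first exact: bump_01.
  move=> x nE.
  have h1 : x <= c.
    rewrite leNgt; apply/negP => h; apply: nE; right; by rewrite /= in_itv /= h.
  have /notin_ball h2 : ~ `]a - d, a + d[%classic x by move=> h; apply: nE; left.
  rewrite /indic (_ : (x \in _) = (a < x)); last first.
    apply/idP/idP => [/set_mem|h]; first by rewrite /= in_itv /= andbT.
    by apply/mem_set; rewrite /= in_itv /= andbT.
  have [xa|ax] := leP x a.
    by rewrite bump0 //; left; rewrite aff1 le0_div // subr_le0.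
  rewrite bump1 //; last by rewrite mulN1r; lra.
  by rewrite aff1 ge1_div //; case: h2 => h2; lra.
- have mNa : measurable Na by exact: open_measurable.
  have := esup_ev_fine (mL c0) e4 hc0; have := esup_ev_fine mNa e4 hNa.
  move=> hb ha; near=> n.
  have hb' : fine (var_measure (mu_ n) Na) <= e *+ 2 by near: n.
  have ha' : fine (var_measure (mu_ n) `]c0, +oo[%classic) <= e *+ 2 by near: n.
  rewrite (le_trans (var_U _ (mI _ _) (mL _))) //.
  apply: (@le_trans _ _ (e *+ 2 + e *+ 2)); last by rewrite /e !mulr2n; lra.
  apply: lerD.
    apply: le_trans hb'; apply: le_var => //; apply: subset_trans hda.
    exact: sub.
  apply: le_trans ha'; apply: le_var => // y /=; rewrite !in_itv /= !andbT => h.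
  exact: le_lt_trans cc0 h.
- rewrite (le_trans (var_U _ (mI _ _) (mL _))) //.
  apply: (@le_trans _ _ (e + e)); last by rewrite /e; lra.
  apply: lerD; last exact: hk.
  apply: le_trans hma; exact: le_var (mI _ _) (mI _ _) (sub _ _ _ dma).
Unshelve. all: end_near. Qed.

End partb2.

Section parta1.
Context {R : realType}.

Lemma unif_cont (f : R -> R) (S : set R) : continuous f -> compact S ->
  forall eps, 0 < eps -> exists2 d, 0 < d &
    forall x y, S x -> `|x - y| < d -> `|f x - f y| < eps.
Proof.
move=> cf cS eps e0.
have /compact_near_coveringP cov := cS.
pose P (k : nat) (x : R) := forall y, `|x - y| < k.+1%:R^-1 -> `|f x - f y| < eps.
have e20 : 0 < eps / 2 by rewrite divr_gt0.
have H : forall x, S x -> \forall x' \near x & i \near \oo, P i x'.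
  move=> x Sx.
  have := cf x; move/cvgrPdist_lt => /(_ _ e20) /nbhs_ballP [r r0 hr].
  have r20 : 0 < r / 2 by rewrite divr_gt0.
  have [N hN] := ltr_add_invr r20; rewrite add0r in hN.
  exists (ball x (r / 2), [set i | (N <= i)%N]); first split.
  - exact: nbhsx_ballx.
  - by exists N.
  move=> [x' i] /= [hx hi] y hy.
  have hi' : i.+1%:R^-1 <= N.+1%:R^-1 :> R.
    by rewrite lef_pV2 ?posrE // ler_nat ltnS.
  rewrite -ball_normE /= in hx.
  have h1 : `|f x - f x'| < eps / 2 by apply: hr; rewrite -ball_normE /=; lra.
  have h2 : `|f x - f y| < eps / 2.
    apply: hr; rewrite -ball_normE /=.
    have := ler_normD (x - x') (x' - y); rewrite (_ : x - x' + (x' - y) = x - y); last by ring.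
    set t := i.+1%:R^-1 in hy hi'; set u := N.+1%:R^-1 in hN hi'.
    lra.
  have := ler_normB (f x - f x') (f x - f y).
  rewrite (_ : f x - f x' - (f x - f y) = - (f x' - f y)); last by ring.
  rewrite normrN; lra.
have [N _ hN] := cov nat \oo P _ H.
exists N.+1%:R^-1 => //.
by move=> x y Sx; apply: (hN N (leqnn N)).
Qed.

End parta1.

Section parta2.
Context {R : realType}.

Lemma sum_cvg m (g : nat -> nat -> R) (l : nat -> R) :
  (forall i, g i n @[n --> \oo] --> l i) ->
  (\sum_(i < m) g i n) @[n --> \oo] --> \sum_(i < m) l i.
Proof.
move=> hg; elim: m => [|m IH].
  rewrite big_ord0 (_ : (fun n => _) = fun=> 0); first exact: cvg_cst.
  by apply: funext => n; rewrite big_ord0.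
rewrite big_ord_recr /= (_ : (fun n => _) = fun n => \sum_(i < m) g i n + g m n).
  exact: cvgD.
by apply: funext => n; rewrite big_ord_recr.
Qed.

Lemma ind_oc (a b x : R) : \1_(`]a, b]%classic) x = ((a < x) && (x <= b))%:R :> R.
Proof.
rewrite /indic; congr (_%:R); congr nat_of_bool.
by apply/idP/idP => [/set_mem|h]; [rewrite /= in_itv|apply/mem_set; rewrite /= in_itv].
Qed.

Lemma good_step k (c : nat -> R) (S : nat -> set R) : (forall i, measurable (S i)) ->
  good (fun x => \sum_(i < k) c i * \1_(S i) x).
Proof.
move=> mS; elim: k => [|j IHj].
  split; first by under eq_fun do rewrite big_ord0; exact: measurable_cst.
  by exists 0 => x; rewrite big_ord0 normr0.
under [X in good X]eq_fun do rewrite big_ord_recr /=.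
by apply: goodD => //; apply: goodZ; exact: good_indic.
Qed.

Lemma partition (t : nat -> R) : (forall i, t i <= t i.+1) ->
  forall k x, \sum_(i < k) \1_(`]t i, t i.+1]%classic) x = \1_(`]t 0%N, t k]%classic) x :> R.
Proof.
move=> ti; have tm : nondecreasing_seq t by apply/nondecreasing_seqP.
elim => [|k IH] x.
  by rewrite big_ord0 ind_oc; have [h|h] := ltP (t 0%N) x => //=.
rewrite big_ord_recr /= IH !ind_oc.
have t0k : t 0%N <= t k by apply: tm.
have tkk := ti k.
have [h1|h1] := ltP (t 0%N) x; have [h2|h2] := leP x (t k);
  have [h3|h3] := leP x (t k.+1) => /=; rewrite ?addr0 ?add0r //; try lra.
Qed.

End parta2.

Section parta3.
Context {R : realType}.

Lemma a_main (mu_ : nat -> signed_measure R) mu :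
  (forall a b, cont_pt mu a -> cont_pt mu b -> a <= b ->
     fine (mu_ n `]a, b]%classic) @[n --> \oo] --> fine (mu `]a, b]%classic)) ->
  bounded_on_compacts mu_ -> vague_cvg mu_ mu.
Proof.
move=> hI hB f Cf; have gf := Cc_good Cf; case: Cf => cf [K [cK fK]].
have [L [L0 hL]] : exists L, 0 < L /\ forall x, K x -> `|x| <= L.
  have [M [_ hM]] := compact_bounded cK.
  have nM := normr_ge0 M.
  exists (`|M| + 1); split; first lra.
  move=> x Kx; apply: hM => //; rewrite (le_lt_trans (ler_norm M)) //; lra.
pose S := `[- L - 2, L + 2]%classic : set R.
have mS : measurable S by exact: measurable_itv.
have cSS : compact S by exact: segment_compact.
have [M0 hM0] := hB S cSS.
have hM0' n : fine (var_measure (mu_ n) S) <= `|M0|.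
  by rewrite -lee_fin fineK ?var_fin // (le_trans (hM0 n)) // lee_fin ler_norm.
pose V := fine (var_measure mu S).
have V0 : 0 <= V := fine_var_ge0 _ _.
apply/cvgrPdist_le => e e0.
pose Mp := `|M0| + V + 1.
have Mp0 : 0 < Mp by have := normr_ge0 M0; rewrite /Mp; lra.
pose eps := e / (3 * Mp).
have eps0 : 0 < eps by rewrite divr_gt0 // mulr_gt0.
have epsMp : eps * Mp = e / 3 by rewrite /eps; field; rewrite gt_eqF.
have [dl dl0 hdl] := unif_cont cf cSS eps0.
pose h := Num.min (dl / 2) 1.
have h0 : 0 < h by rewrite lt_min ltr01 divr_gt0.
have h1 : h <= 1 by rewrite ge_min lexx orbT.
have h2 : h <= dl / 2 by rewrite ge_min lexx.
pose y := (2 * L + 2) / h.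
have y0 : 0 <= y by rewrite divr_ge0 // ?ltW //; lra.
pose m := (Num.truncn y).+1.
have hm1 : 2 * L + 2 <= m%:R * h.
  have := truncnS_gt y; rewrite -/m => hy.
  by rewrite -ler_pdivrMr // ltW.
have hm2 : m%:R * h <= 2 * L + 2 + h.
  have := truncn_le y; rewrite y0 => hy.
  rewrite /m -addn1 natrD mulrDl mul1r lerD2r -ler_pdivlMr //.
pose c (i : nat) := - L - 1 + i%:R * h.
have tE i : exists t, c i - h / 4 < t < c i /\ cont_pt mu t.
  by apply: exists_cont_pt; rewrite gtrBl divr_gt0.
pose t i := proj1_sig (cid (tE i)).
have tP i : c i - h / 4 < t i < c i /\ cont_pt mu (t i) := proj2_sig (cid (tE i)).
have cS i : c i.+1 = c i + h by rewrite /c -addn1 natrD mulrDl mul1r addrA.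
have tinc i : t i < t i.+1.
  have [/andP[a1 a2] _] := tP i; have [/andP[b1 b2] _] := tP i.+1.
  rewrite cS in b1 b2; lra.
have tgap i : t i.+1 - t i < dl.
  have [/andP[a1 a2] _] := tP i; have [/andP[b1 b2] _] := tP i.+1.
  rewrite cS in b1 b2; lra.
have tmono : nondecreasing_seq t.
  by apply/nondecreasing_seqP => i; exact: ltW.
have c0 : c 0%N = - L - 1 by rewrite /c mul0r addr0.
have [t0a t0b] : - L - 2 <= t 0%N /\ t 0%N < - L.
  have [/andP[a1 a2] _] := tP 0%N; rewrite c0 in a1 a2; split; lra.
have [tma tmb] : L < t m /\ t m <= L + 2.
  have [/andP[a1 a2] _] := tP m; rewrite /c in a1 a2; split; lra.
pose J := `]t 0%N, t m]%classic.
have mJ : measurable J by exact: measurable_itv.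
have JS : J `<=` S.
  move=> x; rewrite /J /S /= !in_itv /= => /andP[x1 x2]; apply/andP; split; lra.
pose I i := `]t i, t i.+1]%classic.
have mI i : measurable (I i) by exact: measurable_itv.
pose s x := \sum_(i < m) f (t i.+1) * \1_(I i) x.
have gs : good s by exact: (@good_step R m (fun i => f (t i.+1)) I mI).
have key x : `|f x - s x| <= eps * \1_J x.
  have fJ : f x = f x * \1_J x.
    rewrite /J ind_oc; have [xa|xa] := ltP (t 0%N) x; have [xb|xb] := leP x (t m);
      rewrite /= ?mulr1 ?mulr0 //.
    + by rewrite fK // => /hL; have := normr_ge0 x; rewrite ler_norml => _ /andP[]; lra.
    + by rewrite fK // => /hL; rewrite ler_norml => /andP[]; lra.
    + by rewrite fK // => /hL; rewrite ler_norml => /andP[]; lra.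
  have part := partition (fun i => ltW (tinc i)) m x.
  rewrite -/J in part.
  have -> : f x - s x = \sum_(i < m) (f x - f (t i.+1)) * \1_(I i) x.
    rewrite [in LHS]fJ -part mulr_sumr /s -sumrB.
    by apply: eq_bigr => i _; rewrite mulrBl.
  rewrite (le_trans (ler_norm_sum _ _ _)) // -part mulr_sumr.
  apply: ler_sum => i _; rewrite /I ind_oc normrM.
  have [xi|xi] := ltP (t i) x; have [xj|xj] := leP x (t i.+1);
    rewrite /= ?normr0 ?mulr0 ?normr1 ?mulr1 //.
  apply: ltW; apply: hdl.
    apply: JS; rewrite /J /= in_itv /=; apply/andP; split.
      exact: le_lt_trans (tmono _ _ (leq0n i)) xi.
    exact: le_trans xj (tmono _ _ (ltn_ord i)).
  have := tgap i; rewrite ler0_norm ?subr_le0 //; lra.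
have bnd nu : `|Defs.sintegral nu f - Defs.sintegral nu s| <=
    eps * fine (var_measure nu S).
  rewrite -sintB //; apply: (le_trans (sint_bound _ (goodB gf gs) mJ key)).
  by rewrite ler_wpM2l //; [exact: ltW|exact: (le_var _ mJ mS JS)].
have conv : Defs.sintegral (mu_ n) s @[n --> \oo] --> Defs.sintegral mu s.
  rewrite /s (@sint_step R mu m (fun i => f (t i.+1)) I mI).
  rewrite (_ : (fun n => _) = fun n => \sum_(i < m) f (t i.+1) * fine (mu_ n (I i))).
    apply: (@sum_cvg R m (fun i n => f (t i.+1) * fine (mu_ n (I i)))
      (fun i => f (t i.+1) * fine (mu (I i)))) => i.
    apply: cvgM; first exact: cvg_cst.
    by apply: hI; [exact: (tP i).2|exact: (tP i.+1).2|exact: ltW].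
  by apply: funext => n; rewrite (@sint_step R (mu_ n) m (fun i => f (t i.+1)) I mI).
have e30 : 0 < e / 3 by rewrite divr_gt0.
move/cvgrPdist_le : conv => /(_ _ e30) conv.
near=> n.
have c1 : `|Defs.sintegral mu s - Defs.sintegral (mu_ n) s| <= e / 3 by near: n.
have b1 := bnd mu; have b2 := bnd (mu_ n).
have b3 : eps * fine (var_measure (mu_ n) S) <= eps * `|M0|.
  by rewrite ler_wpM2l ?hM0' //; exact: ltW.
rewrite -/V in b1.
set A := Defs.sintegral mu f in b1 *; set B := Defs.sintegral (mu_ n) f in b2 *.
set As := Defs.sintegral mu s in b1 c1; set Bs := Defs.sintegral (mu_ n) s in b2 c1.
have -> : A - B = (A - As) + (As - Bs) - (B - Bs) by ring.
rewrite (le_trans (ler_normB _ _)) // (le_trans (lerD (ler_normD _ _) (lexx _))) //.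
have h4 : eps * V + eps * `|M0| <= e / 3.
  rewrite -epsMp -mulrDr ler_wpM2l ?ltW // /Mp; lra.
lra.
Unshelve. all: end_near. Qed.

End parta3.

Unset Implicit Arguments. Set Strict Implicit.

Lemma Fcvg_itv (R : realType) (mu_ : nat -> signed_measure R) mu al :
  Fdist_cvg mu_ mu al -> forall a b, cont_pt mu a -> cont_pt mu b -> a <= b ->
  fine (mu_ n `]a, b]%classic) @[n --> \oo] --> fine (mu `]a, b]%classic).
Proof.
move=> hF a b ca cb ab; rewrite (Fdist_diff mu al ab).
rewrite (_ : (fun n => _) = fun n => Fdist (mu_ n) al b - Fdist (mu_ n) al a).
  by apply: cvgB; [exact: hF|exact: hF].
by apply: funext => n; rewrite (Fdist_diff (mu_ n) al ab).
Qed.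

Theorem theorem3p8 (R : realType) (mu_ : nat -> signed_measure R)
    (mu : signed_measure R) :
  (* alpha in R *)
  (forall alpha : R,
    ((Fdist_cvg mu_ mu alpha%:E -> bounded_on_compacts mu_ -> vague_cvg mu_ mu)
    /\ (vague_cvg mu_ mu -> cont_pt mu alpha ->
        (forall x, cont_pt mu x -> no_mass_at mu_ x) ->
        Fdist_cvg mu_ mu alpha%:E))) /\
  (* alpha = -oo *)
  ((Fdist_cvg mu_ mu -oo%E -> bounded_on_compacts mu_ ->
      (forall c : R, exists M : R, forall n,
         (var_measure (mu_ n) (`]-oo, c]%classic) <= M%:E)%E) ->
      vague_cvg mu_ mu)
   /\ (vague_cvg mu_ mu -> no_mass_at_minfty mu_ ->
        (forall x, cont_pt mu x -> no_mass_at mu_ x) ->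
        Fdist_cvg mu_ mu -oo%E)) /\
  (* alpha = +oo *)
  ((Fdist_cvg mu_ mu +oo%E -> bounded_on_compacts mu_ ->
      (forall c : R, exists M : R, forall n,
         (var_measure (mu_ n) (`]c, +oo[%classic) <= M%:E)%E) ->
      vague_cvg mu_ mu)
   /\ (vague_cvg mu_ mu -> no_mass_at_pinfty mu_ ->
        (forall x, cont_pt mu x -> no_mass_at mu_ x) ->
        Fdist_cvg mu_ mu +oo%E)).
Proof.
split; [|split; split].
- move=> al; split.
    by move=> hF hB; apply: a_main hB; exact: Fcvg_itv hF.
  move=> vc ca nm x cx; rewrite /Fdist.
  have [ax|xa] := leP al x.
    exact: b_itv vc ca cx (nm _ ca) (nm _ cx).
  by apply: cvgN; exact: b_itv vc cx ca (nm _ cx) (nm _ ca).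
- by move=> hF hB _; apply: a_main hB; exact: Fcvg_itv hF.
- move=> vc nmi nm x cx; rewrite /Fdist.
  exact: b_minfty vc nmi cx (nm _ cx).
- by move=> hF hB _; apply: a_main hB; exact: Fcvg_itv hF.
- move=> vc nmi nm x cx; rewrite /Fdist.
  by apply: cvgN; exact: b_pinfty vc nmi cx (nm _ cx).
Qed.
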